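(* Let $S(\mathbf{G},\mathbf{\Sigma})$ be a constrained switching system with automaton $\mathbf{G}(V,E)$ and $\mathbf{\Sigma}=\{A_1,\dots,A_N\}\subset\mathbb{R}^{n\times n}$, and let $|\cdot|$ be a fixed vector norm on $\mathbb{R}^n$. Then $S$ admits an extremal multinorm, i.e. a multinorm $\mathcal{M}^*=\{|\cdot|_v : v\in V\}$ with $\gamma^*(\mathcal{M}^* )=\hat\rho(S)$, if and only if there exists a constant $K\ge 1$ such that for every path $p$ in $\mathbf{G}$ and every $x\in\mathbb{R}^n$, $$|A_p x|\le K\,\hat\rho(S)^{T_p}|x|,$$ where $T_p\ge 0$ is the length of $p$.
   Context: An automaton $\mathbf{G}(V,E)$ is a strongly connected directed graph with finite node set $V$ and finite edge set $E$ of labelled edges $(v,w,\sigma)$, $v,w\in V$, $\sigma\in\{1,\dots,N\}$. A path of length $T$ is a sequence of $T$ consecutive edges; if its labels are $\sigma(1),\dots,\sigma(T)$ then $A_p=A_{\sigma(T)}\cdots A_{\sigma(1)}$, and $A_p=I$ for $T=0$. A sequence of modes is accepted by $\mathbf{G}$ if it is the succession of labels along some path (no prescribed initial or final node). The CJSR of $S(\mathbf{G},\mathbf{\Sigma})$ is $$\hat\rho(S)=\lim_{t\to\infty}\max\{\|A_{\sigma(t-1)}\cdots A_{\sigma(0)}\|^{1/t} : \sigma(0),\dots,\sigma(t-1)\text{ accepted by }\mathbf{G}\}.$$ A multinorm for $S$ is a family $\{|\cdot|_v : v\in V\}$ of vector norms on $\mathbb{R}^n$, one per node, with value $\gamma^*(\mathcal{M})=\min\{\gamma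 : |A_\sigma x|_w\le\gamma|x|_v\ \forall x\in\mathbb{R}^n,\ \forall (v,w,\sigma)\in E\}$. *)

(* Defs.v *)
From HB Require Import structures.
From mathcomp Require Import all_boot all_order all_algebra.
From mathcomp Require Import all_classical all_reals all_analysis.
Set Implicit Arguments. Unset Strict Implicit. Unset Printing Implicit Defensive.
Import Order.TTheory GRing.Theory Num.Theory.
Import numFieldNormedType.Exports.
Local Open Scope ring_scope.

Section CSS.
Variables (R : realType) (n N : nat) (V : finType).

(* A labelled edge (v, w, sigma): e.1.1 = v (source), e.1.2 = w (target),
   e.2 = sigma (mode label; modes 1..N are indexed by 'I_N). *)
Definition edge := (V * V * 'I_N)%type.

Fixpoint consecutive (p : seq edge) : bool :=
  match p with
  | e1 :: ((e2 :: _) as q) => (e1.1.2 == e2.1.1) && consecutive q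
  | _ => true
  end.

Definition is_path (E : {set edge}) (p : seq edge) : bool :=
  all (fun e => e \in E) p && consecutive p.

Definition strongly_connected (E : {set edge}) : Prop :=
  forall v w : V, v = w \/
    exists (e : edge) (p : seq edge),
      is_path E (e :: p) /\ e.1.1 = v /\ (last e p).1.2 = w.

(* product A_{s_(T-1)} ... A_{s_0} for a label sequence s_0, ..., s_(T-1);
   the empty product is the identity *)
Definition prodA (A : 'I_N -> 'M[R]_n) (s : seq 'I_N) : 'M[R]_n :=
  foldl (fun M k => A k *m M) 1%:M s.

Definition Apath (A : 'I_N -> 'M[R]_n) (p : seq edge) : 'M[R]_n :=
  prodA A (map (fun e => e.2) p).

Definition accepted (E : {set edge}) t (s : t.-tuple 'I_N) : bool :=
  [exists p : t.-tuple edge, is_path E p && (map (fun e => e.2) p == s)].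

(* CJSR: lim_t max { ||A_{s(t-1)} ... A_{s(0)}||^(1/t) : s accepted },
   ||.|| being the library norm on matrices (max of absolute entries);
   the max over an empty family is 0. *)
Definition cjsr (E : {set edge}) (A : 'I_N -> 'M[R]_n) : R :=
  limn (fun t : nat =>
    \big[Num.max/0]_(s : t.-tuple 'I_N | accepted E s)
       (`|prodA A s| `^ (t%:R)^-1)).

Definition is_vnorm (nu : 'cV[R]_n -> R) : Prop :=
  (forall x, 0 <= nu x) /\ (forall x, nu x = 0 -> x = 0) /\
  (forall (a : R) x, nu (a *: x) = `|a| * nu x) /\
  (forall x y, nu (x + y) <= nu x + nu y).

Definition is_multinorm (M : V -> 'cV[R]_n -> R) : Prop :=
  forall v, is_vnorm (M v).

Definition gamma_ok (E : {set edge}) (A : 'I_N -> 'M[R]_n)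
  (M : V -> 'cV[R]_n -> R) (g : R) : Prop :=
  forall e, e \in E -> forall x, M e.1.2 (A e.2 *m x) <= g * M e.1.1 x.

Definition is_gamma_star (E : {set edge}) (A : 'I_N -> 'M[R]_n)
  (M : V -> 'cV[R]_n -> R) (g : R) : Prop :=
  0 <= g /\ gamma_ok E A M g /\
  (forall g', 0 <= g' -> gamma_ok E A M g' -> g <= g').

Definition extremal_multinorm (E : {set edge}) (A : 'I_N -> 'M[R]_n)
  (M : V -> 'cV[R]_n -> R) : Prop :=
  is_multinorm M /\ is_gamma_star E A M (cjsr E A).

End CSS.

(* Main.v *)
Require Import Defs.
From HB Require Import structures.
From mathcomp Require Import all_boot all_order all_algebra.
From mathcomp Require Import all_classical all_reals all_analysis.
From mathcomp Require Import lra ring zify.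
Import Order.TTheory GRing.Theory Num.Theory.
Import numFieldNormedType.Exports.
Local Open Scope ring_scope.
Local Open Scope classical_set_scope.

Section Equiv.
Variables (R : realType) (m n : nat).

Lemma mx_entry_le (A : 'M[R]_(m, n)) i j : `|A i j| <= `|A|.
Proof.
have -> : `|A| = mx_norm A := erefl. rewrite mx_normrE.
exact: (le_bigmax _ (fun ij : 'I_m * 'I_n => `|A ij.1 ij.2|) (i, j)).
Qed.

Lemma mx_norm_leP (A : 'M[R]_(m, n)) b :
  0 <= b -> (forall i j, `|A i j| <= b) -> `|A| <= b.
Proof.
move=> b0 H; have -> : `|A| = mx_norm A := erefl. rewrite mx_normrE.
by apply: bigmax_le => // -[i j] _; exact: H.
Qed.

End Equiv.
Arguments mx_entry_le {R m n}.
Arguments mx_norm_leP {R m n}.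
Lemma mx_norm_tr (R : realType) m n (A : 'M[R]_(m, n)) : `|A^T| = `|A|.
Proof.
apply/eqP; rewrite eq_le; apply/andP; split.
  apply: mx_norm_leP => // i j; rewrite mxE; exact: mx_entry_le.
apply: mx_norm_leP => // i j.
have := mx_entry_le A^T j i; by rewrite mxE.
Qed.

Lemma vnorm0 (R : realType) n (nu : 'cV[R]_n -> R) : is_vnorm nu -> nu 0 = 0.
Proof.
move=> [_ [_ [hZ _]]]; have := hZ 0 0; rewrite scale0r normr0 mul0r; exact.
Qed.

Lemma vnormN (R : realType) n (nu : 'cV[R]_n -> R) x : is_vnorm nu -> nu (- x) = nu x.
Proof.
move=> [_ [_ [hZ _]]]; have := hZ (-1) x; rewrite scaleN1r normrN normr1 mul1r; exact.
Qed.

Lemma vnorm_sum (R : realType) n (nu : 'cV[R]_n -> R) (I : finType) (F : I -> 'cV[R]_n) :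
  is_vnorm nu -> nu (\sum_i F i) <= \sum_i nu (F i).
Proof.
move=> H; elim/big_rec2 : _ => [|i y2 y1 _ Hy]; first by rewrite vnorm0.
have [_ [_ [_ hT]]] := H.
have h1 := hT (F i) y1. have h2 : nu (F i) + nu y1 <= nu (F i) + y2 by rewrite lerD2l. exact: (le_trans h1 h2).
Qed.

Lemma vnorm_upper (R : realType) n (nu : 'cV[R]_n -> R) :
  is_vnorm nu -> exists B, 0 <= B /\ forall x, nu x <= B * `|x|.
Proof.
move=> H; have [h0 [_ [hZ _]]] := H.
exists (\sum_(i < n) nu (delta_mx i 0)); split.
  by apply: sumr_ge0 => i _; exact: h0.
move=> x.
have Ex : x = \sum_(i < n) x i 0 *: delta_mx i 0.
  by rewrite {1}(matrix_sum_delta x); apply: eq_bigr => i _; rewrite big_ord1.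
rewrite {1}Ex.
apply: (le_trans (@vnorm_sum _ _ _ _ _ H)).
rewrite mulr_suml; apply: ler_sum => i _; rewrite hZ mulrC.
apply: ler_wpM2l; first exact: h0.
exact: mx_entry_le.
Qed.

Lemma vnorm_lower (R : realType) n (nu : 'cV[R]_n -> R) :
  is_vnorm nu -> exists c, 0 < c /\ forall x, c * `|x| <= nu x.
Proof.
move=> H; have [h0 [hd [hZ hT]]] := H.
have [B [B0 HB]] := @vnorm_upper _ _ _ H.
pose f (y : 'rV[R]_n) := nu y^T.
pose S := [set y : 'rV[R]_n | `|y| = 1].
have inS : forall x : 'cV[R]_n, x != 0 -> S (`|x|^-1 *: x^T).
  move=> x x0; rewrite /S /= normrZ mx_norm_tr ger0_norm ?invr_ge0 //.
  by rewrite mulVf // normr_eq0.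
have fS : forall x : 'cV[R]_n, f (`|x|^-1 *: x^T) = `|x|^-1 * nu x.
  by move=> x; rewrite /f linearZ /= trmxK hZ ger0_norm // invr_ge0.
case: (pselect (S !=set0)) => [S0|S0]; last first.
  exists 1; split => // x; have [->|x0] := eqVneq x 0.
    by rewrite normr0 mulr0 h0.
  by exfalso; apply: S0; exists (`|x|^-1 *: x^T); exact: inS.
have cS : compact S.
  apply: bounded_closed_compact.
    rewrite /= /bounded_near; near=> M => y /= ->; near: M; exact: nbhs_pinfty_ge (num_real 1).
  exact: ((continuous_closedP (fun y : 'rV[R]_n => `|y|)).1 (@norm_continuous R _) [set x : R | x = 1] (@closed_eq R 1)).
have cf : continuous f.
  move=> y; apply: (@cvgrPdist_lt R R _ (nbhs y) _ f (f y)).2 => e e0.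
  have e1 : 0 < e / (B + 1) by rewrite divr_gt0 // ltr_wpDl.
  near=> z.
  have Hd : `|f y - f z| <= B * `|y - z|.
    rewrite -mx_norm_tr linearB /= /f.
    have Hyz := hT (y^T - z^T) z^T; rewrite subrK in Hyz.
    have Hzy := hT (z^T - y^T) y^T; rewrite subrK -opprB vnormN // in Hzy.
    apply: le_trans (HB (y^T - z^T)).
    rewrite ler_norml; apply/andP; split; lra.
  apply: le_lt_trans Hd _.
  have Hz : `|y - z| < e / (B + 1).
    near: z; exact: (@cvgr_dist_lt R 'rV[R]_n _ (nbhs y) _ (fun z => z) y (@cvg_id _ _) _ e1).
  rewrite ltr_pdivlMr ?ltr_wpDl // in Hz.
  have Hn := normr_ge0 (y - z).
  nra.
have [c0 /set_mem c0S Hmin] := compact_EVT_min S0 cS (continuous_subspaceT cf).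
have m0 : 0 < f c0.
  rewrite lt_def h0 andbT; apply/negP => /eqP /hd c00.
  move: c0S; rewrite /S /= -mx_norm_tr c00 normr0 => /esym/eqP.
  by rewrite oner_eq0.
exists (f c0); split => // x; have [->|x0] := eqVneq x 0.
  by rewrite normr0 mulr0 h0.
have := Hmin _ (mem_set (inS x x0)); rewrite fS.
have xp : 0 < `|x| by rewrite normr_gt0.
by rewrite ler_pdivlMl // mulrC.
Unshelve. all: by end_near.
Qed.

Lemma vnorm_equiv (R : realType) n (nu : 'cV[R]_n -> R) :
  is_vnorm nu -> exists C, 1 <= C /\ forall x, `|x| <= C * nu x /\ nu x <= C * `|x|.
Proof.
move=> H; have [B [B0 HB]] := @vnorm_upper _ _ _ H.
have [c [c0 Hc]] := @vnorm_lower _ _ _ H.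
have [h0 _] := H.
have ci : 0 <= c^-1 by rewrite invr_ge0 ltW.
exists (1 + B + c^-1); split; first lra.
move=> x; have xn := normr_ge0 x; have nx := h0 x; split.
  have := Hc x; rewrite -ler_pdivlMl // => h.
  apply: le_trans h _; rewrite ler_wpM2r //; lra.
apply: le_trans (HB x) _; rewrite ler_wpM2r //; lra.
Qed.

Arguments vnorm_equiv {R n nu}.
Arguments vnorm0 {R n nu}.
Arguments vnormN {R n nu}.

Section P.
Context {R : realType} {n N : nat} {V : finType}.
Context {E : {set edge N V}} {A : 'I_N -> 'M[R]_n}.

Lemma foldl_mulmx (M B : 'M[R]_n) s :
  foldl (fun M k => A k *m M) (M *m B) s = foldl (fun M k => A k *m M) M s *m B.
Proof. by elim: s M => [|k s IH] M //=; rewrite mulmxA IH. Qed.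

Lemma prodA_cons k s : prodA A (k :: s) = prodA A s *m A k.
Proof. by rewrite /prodA /= -foldl_mulmx mul1mx mulmx1. Qed.

Lemma Apath_cons (e : edge N V) q : Apath A (e :: q) = Apath A q *m A e.2.
Proof. by rewrite /Apath /= prodA_cons. Qed.

Lemma Apath_nil : Apath A ([::] : seq (edge N V)) = 1%:M.
Proof. by []. Qed.

Lemma is_path_cons2 (e e' : edge N V) q :
  is_path E (e :: e' :: q) = [&& e \in E, e.1.2 == e'.1.1 & is_path E (e' :: q)].
Proof.
rewrite /is_path /=.
by case: (e \in E); case: (e.1.2 == e'.1.1); rewrite /= ?andbF.
Qed.

Lemma is_path1 (e : edge N V) : is_path E [:: e] = (e \in E).
Proof. by rewrite /is_path /= andbT andbT. Qed.

Lemma is_path_tail (e : edge N V) q : is_path E (e :: q) -> is_path E q.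
Proof.
case: q => [|e' q] //; by rewrite is_path_cons2 => /and3P[].
Qed.

Lemma path_bound (M : V -> 'cV[R]_n -> R) g :
  0 <= g -> gamma_ok E A M g ->
  forall q e x, is_path E (e :: q) ->
  M (last e q).1.2 (Apath A (e :: q) *m x) <= g ^+ (size q).+1 * M e.1.1 x.
Proof.
move=> g0 Hg; elim=> [|e' q IH] e x.
  rewrite is_path1 => eE /=; rewrite Apath_cons Apath_nil mul1mx expr1.
  exact: Hg.
rewrite is_path_cons2 => /and3P[eE /eqP ee' Hp].
rewrite Apath_cons -mulmxA /=.
apply: le_trans (IH _ _ Hp) _.
rewrite -ee' [in leRHS]exprS -mulrA mulrCA; apply: ler_wpM2l; first exact: exprn_ge0.
by rewrite mulrC (le_trans (Hg _ eE _)) // mulrC.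
Qed.
End P.

Lemma bernoulli_ineq (R : realType) (h : R) k :
  0 <= h -> 1 + k%:R * h <= (1 + h) ^+ k.
Proof.
move=> h0; elim: k => [|k IH]; first by rewrite mul0r addr0 expr0.
rewrite exprS -natr1.
have k0 : 0 <= k%:R :> R by [].
have hh : 0 <= k%:R * (h * h) by rewrite mulr_ge0 // mulr_ge0.
nra.
Qed.

Lemma limn_ge0 (R : realType) (u : nat -> R) :
  (forall t, 0 <= u t) -> 0 <= limn u.
Proof.
move=> u0; have [hc|hd] := pselect (cvgn u).
  by apply: limr_ge => //; apply: nearW.
by rewrite dvgP.
Qed.

Lemma limn_bound (R : realType) (u : nat -> R) (g D : R) :
  0 <= g -> 0 <= D ->
  (forall t, (0 < t)%N -> forall q, 0 < q -> q < u t -> q ^+ t <= D * g ^+ t) ->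
  limn u <= g.
Proof.
move=> g0 D0 H.
rewrite leNgt; apply/negP => gL.
have hc : cvgn u.
  apply: contrapT => hd; move: gL; rewrite dvgP // => /(le_lt_trans g0).
  by rewrite ltxx.
set L := limn u in gL.
set q := (g + L) / 2.
have gq : g < q by rewrite /q; lra.
have qL : q < L by rewrite /q; lra.
have q0 : 0 < q by lra.
have [N _ HN] := cvgr_gt _ hc q qL.
have [g0'|gpos] := eqVneq g 0.
  have := H N.+1 isT q q0 (HN N.+1 (leqnSn N)).
  rewrite g0' expr0n /= mulr0 => /(lt_le_trans (exprn_gt0 N.+1 q0)).
  by rewrite ltxx.
have gp : 0 < g by rewrite lt_def gpos g0.
set r := q / g.
have r1 : 1 < r by rewrite /r ltr_pdivlMr // mul1r.
set k := Num.Def.archi_bound (D / (r - 1)).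
have hk : D / (r - 1) < k%:R by apply: archi_boundP; rewrite divr_ge0 // subr_ge0 ltW.
set t := (N + k).+1.
have hNt : (N <= t)%N by rewrite /t; lia.
have := H t isT q q0 (HN t hNt).
have -> : q = r * g by rewrite /r mulfVK // gt_eqF.
rewrite exprMn ler_pM2r ?exprn_gt0 //.
have r10 : 0 < r - 1 by lra.
have hb := @bernoulli_ineq R (r - 1) t (ltW r10).
have er : 1 + (r - 1) = r by ring.
rewrite er in hb.
rewrite ltr_pdivrMr // in hk.
have tk : k%:R <= t%:R :> R by rewrite ler_nat /t; lia.
have : k%:R * (r - 1) <= t%:R * (r - 1) by rewrite ler_pM2r.
lra.
Qed.

Section B.
Context {R : realType} {n N : nat} {V : finType}.
Context {E : {set edge N V}} {A : 'I_N -> 'M[R]_n}.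

Lemma cjsr_ge0 : 0 <= cjsr E A.
Proof.
apply: limn_ge0 => t; elim/big_ind: _ => //.
by move=> a b a0 b0; rewrite le_max a0.
Qed.

Lemma delta_norm_le1 (j : 'I_n) (l : 'I_1) : `|delta_mx j l : 'cV[R]_n| <= 1.
Proof.
apply: mx_norm_leP => // i k; rewrite mxE.
by case: (_ && _); rewrite ?normr1 ?normr0.
Qed.

Lemma mx_bound_from_vec (P : 'M[R]_n) (nrm : 'cV[R]_n -> R) C b :
  0 <= C -> (forall x, `|x| <= C * nrm x /\ nrm x <= C * `|x|) ->
  0 <= b -> (forall x, nrm (P *m x) <= b * nrm x) ->
  `|P| <= C * C * b.
Proof.
move=> C0 HC b0 Hb; apply: mx_norm_leP.
  by rewrite !mulr_ge0.
move=> i j.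
have h := congr1 (fun M : 'cV[R]_n => M i 0) (colE j P).
rewrite /= mxE in h; rewrite h.
apply: le_trans (mx_entry_le _ i _) _.
apply: le_trans (HC _).1 _.
rewrite -mulrA; apply: ler_wpM2l => //.
apply: le_trans (Hb _) _.
rewrite mulrC; apply: ler_wpM2r => //.
apply: le_trans (HC _).2 _.
by rewrite -[leRHS]mulr1; apply: ler_wpM2l => //; exact: delta_norm_le1.
Qed.


Lemma cjsr_min (nrm : 'cV[R]_n -> R) (K : R) (M : V -> 'cV[R]_n -> R) :
  is_vnorm nrm -> 1 <= K -> (forall v x, nrm x <= M v x /\ M v x <= K * nrm x) ->
  forall g, 0 <= g -> gamma_ok E A M g -> cjsr E A <= g.
Proof.
move=> Hnrm K1 HM g g0 Hg.
have [C [C1 HC]] := vnorm_equiv Hnrm.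
have [h0 _] := Hnrm.
have Hp : forall p, is_path E p -> forall x,
    nrm (Apath A p *m x) <= K * g ^+ size p * nrm x.
  case=> [|e q] Hp x.
    rewrite Apath_nil mul1mx expr0 mulr1 -{1}(mul1r (nrm x)).
    by rewrite ler_wpM2r.
  apply: le_trans (HM (last e q).1.2 _).1 _.
  apply: le_trans (path_bound M g g0 Hg q e x Hp) _.
  rewrite [K * _]mulrC -mulrA; apply: ler_wpM2l; first exact: exprn_ge0.
  exact: (HM _ _).2.
apply: (@limn_bound _ _ _ (C * C * K)) => //.
  by rewrite !mulr_ge0 //; lra.
move=> t t0 q q0 hq.
have [s [sacc qs]] : exists s : t.-tuple 'I_N,
    accepted E s /\ q < `|prodA A s| `^ (t%:R)^-1.
  apply: contrapT => hn; move: hq; apply/negP; rewrite -leNgt.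
  apply: bigmax_le; first exact: ltW q0.
  move=> s sacc; rewrite leNgt; apply/negP => hlt; apply: hn; by exists s; split.
move: sacc => /existsP [p /andP [pp /eqP ps]].
have eP : prodA A s = Apath A p by rewrite /Apath ps.
have hb : `|prodA A s| <= C * C * (K * g ^+ t).
  rewrite eP; apply: mx_bound_from_vec => //; first lra.
    by rewrite mulr_ge0 ?exprn_ge0 //; lra.
  by move=> x; have := Hp p pp x; rewrite size_tuple.
have Pn0 := normr_ge0 (prodA A s).
have : q ^+ t < (`|prodA A s| `^ (t%:R)^-1) ^+ t.
  by rewrite ltrXn2r // ?ltW // -lt0n.
rewrite -powR_mulrn ?powR_ge0 // -powRrM mulVf ?pnatr_eq0 -?lt0n // powRr1 //.
move=> /ltW h; apply: (le_trans h); rewrite -[C * C * K * _]mulrA; exact: hb.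
Qed.


Definition starts (v : V) (p : seq (edge N V)) : bool :=
  if p is e :: _ then e.1.1 == v else true.

Lemma backward (nrm : 'cV[R]_n -> R) :
  is_vnorm nrm ->
  (exists K : R, 1 <= K /\
      forall p : seq (edge N V), is_path E p ->
        forall x : 'cV[R]_n,
          nrm (Apath A p *m x) <= K * cjsr E A ^+ size p * nrm x) ->
  exists M : V -> 'cV[R]_n -> R, extremal_multinorm E A M.
Proof.
move=> Hnrm [K [K1 HK]].
have [h0 [hd [hZ hT]]] := Hnrm.
have rho0 : 0 <= cjsr E A := cjsr_ge0.
set rho := cjsr E A in rho0 HK *.
have [rhoz|rhonz] := eqVneq rho 0.
  exists (fun _ => nrm); rewrite /extremal_multinorm /is_gamma_star -/rho.
  split; first by move=> v.
  split; first by rewrite rhoz.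
  split.
    move=> e eE x; rewrite rhoz mul0r.
    have := HK [:: e]; rewrite is_path1 => /(_ eE x).
    by rewrite Apath_cons Apath_nil mul1mx rhoz expr1 mulr0 mul0r.
  by move=> g g0 _; rewrite rhoz.
have rhop : 0 < rho by rewrite lt_def rhonz rho0.
pose T (v : V) (x : 'cV[R]_n) := [set r : R | exists p, [/\ is_path E p, starts v p &
    r = nrm (Apath A p *m x) / rho ^+ size p]].
pose M v x := sup (T v x).
have Tnil : forall v x, T v x (nrm x).
  move=> v x; exists [::]; split => //.
  by rewrite Apath_nil mul1mx expr0 divr1.
have T0 : forall v x, T v x !=set0 by move=> v x; exists (nrm x).
have Tub : forall v x r, T v x r -> r <= K * nrm x.
  move=> v x r [p [pp _ ->]].
  have rp : 0 < rho ^+ size p by exact: exprn_gt0.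
  rewrite ler_pdivrMr // mulrAC; exact: HK.
have Thas : forall v x, has_sup (T v x).
  by move=> v x; split => //; exists (K * nrm x) => r; exact: Tub.
have Mlow : forall v x, nrm x <= M v x.
  by move=> v x; apply: sup_upper_bound.
have Mup : forall v x, M v x <= K * nrm x.
  by move=> v x; apply: ge_sup => // r; exact: Tub.
have Mge0 : forall v x, 0 <= M v x by move=> v x; exact: le_trans (h0 x) (Mlow v x).
have Telt : forall v x p, is_path E p -> starts v p ->
    nrm (Apath A p *m x) / rho ^+ size p <= M v x.
  by move=> v x p pp sp; apply: sup_upper_bound => //; exists p.
exists M; rewrite /extremal_multinorm /is_gamma_star -/rho; split.
  move=> v; split; first exact: Mge0.
  split.
    move=> x Mx0; apply: hd; apply/eqP; rewrite eq_le h0 andbT.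
    by rewrite -Mx0.
  split.
    move=> a x; apply/eqP; rewrite eq_le; apply/andP; split.
      apply: ge_sup => // r [p [pp sp ->]].
      rewrite -scalemxAr hZ -mulrA; apply: ler_wpM2l => //.
      exact: Telt.
    have [->|a0] := eqVneq a 0; first by rewrite normr0 mul0r.
    have ap : 0 < `|a| by rewrite normr_gt0.
    rewrite -ler_pdivlMl //; apply: ge_sup => // r [p [pp sp ->]].
    rewrite ler_pdivlMl // mulrA -hZ scalemxAr; exact: Telt.
  move=> x y; apply: ge_sup => // r [p [pp sp ->]].
  have rp : 0 <= (rho ^+ size p)^-1 by rewrite invr_ge0 exprn_ge0.
  apply: (@le_trans _ _ (nrm (Apath A p *m x) / rho ^+ size p +
                         nrm (Apath A p *m y) / rho ^+ size p)).
    by rewrite -mulrDl mulmxDr ler_wpM2r.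
  by apply: lerD; exact: Telt.
split; first exact: rho0.
split.
  move=> e eE x; apply: ge_sup => // r [p [pp sp ->]].
  have pe : is_path E (e :: p).
    case: p pp sp => [|e' q] pp sp; first by rewrite is_path1.
    by rewrite is_path_cons2 eE pp andbT /= eq_sym; exact: sp.
  have := Telt e.1.1 x (e :: p) pe (eqxx _).
  rewrite Apath_cons -mulmxA /= => H.
  have rp : 0 < rho ^+ size p by exact: exprn_gt0.
  apply: le_trans _ (ler_wpM2l rho0 H).
  rewrite exprS invfM mulrA [rho * _]mulrC mulrA mulrK //.
  by rewrite unitfE gt_eqF.
move=> g g0 Hg.
apply: (@cjsr_min nrm K M Hnrm K1 _ g g0 Hg).
by move=> v x; split; [exact: Mlow|exact: Mup].
Qed.

End B.

Lemma forward (R : realType) (n N : nat) (V : finType)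
  (E : {set edge N V}) (A : 'I_N -> 'M[R]_n) (nrm : 'cV[R]_n -> R) :
  is_vnorm nrm ->
  (exists M : V -> 'cV[R]_n -> R, extremal_multinorm E A M) ->
   (exists K : R, 1 <= K /\
      forall p : seq (edge N V), is_path E p ->
        forall x : 'cV[R]_n,
          nrm (Apath A p *m x) <= K * cjsr E A ^+ size p * nrm x).
Proof.
move=> Hnrm [M [HM [g0 [Hok _]]]].
set rho := cjsr E A in g0 Hok *.
have [C0 [C01 HC0]] := vnorm_equiv Hnrm.
have /choice [Cv HCv] : forall v, exists C, 1 <= C /\
    forall x, `|x| <= C * M v x /\ M v x <= C * `|x|.
  by move=> v; exact: vnorm_equiv (HM v).
have Cv0 : forall v, 0 <= Cv v by move=> v; have [h _] := HCv v; lra.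
have S0 : 0 <= \sum_v Cv v by apply: sumr_ge0 => v _.
set D := C0 + \sum_v Cv v.
have D1 : 1 <= D by rewrite /D; lra.
have D0 : 0 <= D by lra.
have DC0 : C0 <= D by rewrite /D; lra.
have DCv : forall v, Cv v <= D.
  move=> v; rewrite /D (bigD1 v) //=.
  have : 0 <= \sum_(w | w != v) Cv w by apply: sumr_ge0 => w _.
  lra.
exists (D ^+ 4); split; first exact: exprn_ege1.
case=> [|e q] Hp x.
  rewrite Apath_nil mul1mx expr0 mulr1 -{1}(mul1r (nrm x)) ler_wpM2r //.
    by have [h _] := Hnrm.
  exact: exprn_ege1.
set y := Apath A (e :: q) *m x.
set r := rho ^+ size (e :: q).
have r0 : 0 <= r by exact: exprn_ge0.
have [Mw0 _] := HM (last e q).1.2.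
have h1 : nrm y <= D * `|y|.
  apply: le_trans (HC0 y).2 _; rewrite ler_wpM2r ?normr_ge0 //.
have h2 : `|y| <= D * M (last e q).1.2 y.
  apply: le_trans ((HCv (last e q).1.2).2 y).1 _; rewrite ler_wpM2r //.
have h3 : M (last e q).1.2 y <= r * M e.1.1 x.
  exact: (path_bound M rho g0 Hok q e x Hp).
have h4 : M e.1.1 x <= D * `|x|.
  apply: le_trans ((HCv e.1.1).2 x).2 _; rewrite ler_wpM2r ?normr_ge0 //.
have h5 : `|x| <= D * nrm x.
  apply: le_trans (HC0 x).1 _; rewrite ler_wpM2r //.
  by have [h _] := Hnrm.
have -> : D ^+ 4 * r * nrm x = D * (D * (r * (D * (D * nrm x)))) by ring.
apply: le_trans h1 _; apply: (ler_wpM2l D0).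
apply: le_trans h2 _; apply: (ler_wpM2l D0).
apply: le_trans h3 _; apply: (ler_wpM2l r0).
apply: le_trans h4 _; apply: (ler_wpM2l D0).
exact: h5.
Qed.

Close Scope classical_set_scope.

Theorem theorem2p7 (R : realType) (n N : nat) (V : finType)
  (E : {set edge N V}) (A : 'I_N -> 'M[R]_n) (nrm : 'cV[R]_n -> R) :
  strongly_connected E -> is_vnorm nrm ->
  ((exists M : V -> 'cV[R]_n -> R, extremal_multinorm E A M) <->
   (exists K : R, 1 <= K /\
      forall p : seq (edge N V), is_path E p ->
        forall x : 'cV[R]_n,
          nrm (Apath A p *m x) <= K * cjsr E A ^+ size p * nrm x)).
Proof.
move=> _ Hnrm; split; first exact: forward.
exact: backward.
Qed.
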